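(* If $n\ge1$ and $m\ge 2$ are both odd, then $K(\mathbb{Z}_m^n)=\mathbb{Z}_m^n$.
   Context: The Ducci function $D:\mathbb{Z}_m^n\to\mathbb{Z}_m^n$ is $D(x_1,\dots,x_n)=(x_1+x_2,\,x_2+x_3,\,\dots,\,x_{n-1}+x_n,\,x_n+x_1)$, entries mod $m$. $K(\mathbb{Z}_m^n)$ is the set of $\mathbf{u}\in\mathbb{Z}_m^n$ lying in the Ducci cycle of some tuple, i.e. the set of $\mathbf{u}$ with $D^k(\mathbf{u})=\mathbf{u}$ for some $k\ge1$. *)

(* Defs.v *)
From mathcomp Require Import all_boot all_algebra.
Set Implicit Arguments. Unset Strict Implicit. Unset Printing Implicit Defensive.
Import GRing.Theory.
Local Open Scope ring_scope.

(* Tuples in Z_m^n are finite functions 'I_n -> 'Z_m (used only with m >= 2).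
   Coordinate i (0-based) of D x is x_i + x_{i+1}, indices taken cyclically
   (ordS i = i+1 mod n), so the last coordinate is x_{n-1} + x_0. *)
Definition ducci (m n : nat) (x : {ffun 'I_n -> 'Z_m}) : {ffun 'I_n -> 'Z_m} :=
  [ffun i => x i + x (ordS i)].

Definition in_ducci_cycle (m n : nat) (u : {ffun 'I_n -> 'Z_m}) : Prop :=
  exists k : nat, (0 < k)%N /\ iter k (@ducci m n) u = u.

(* Main.v *)
Require Import Defs.
From mathcomp Require Import all_boot all_algebra.
Import GRing.Theory.

Lemma ducci_inj (m' n' : nat) : odd n'.+1 -> odd m'.+2 ->
  injective (@ducci m'.+2 n'.+1).
Proof.
move=> on om x y /ffunP E.
pose d i := (x i - y i : 'Z_m'.+2)%R.
have dS i : d (ordS i) = (- d i)%R.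
  have := E i; rewrite !ffunE /d => Ei.
  apply/eqP; rewrite -subr_eq0 opprK; apply/eqP.
  by rewrite addrC addrACA -opprD Ei subrr.
have Hk : forall k, (k <= n')%N -> d (inord k) = ((-1) ^+ k * d ord0)%R.
  elim=> [|k IH] Hk; first by rewrite expr0 mul1r; congr d; apply/val_inj; rewrite /= inordK.
  have -> : (inord k.+1 : 'I_n'.+1) = ordS (inord k).
    by apply/val_inj; rewrite /= !inordK ?modn_small //; apply: ltnW.
  by rewrite dS IH ?(ltnW Hk) // exprS mulN1r mulNr.
have d0 : d ord0 = 0%R.
  have e : ordS (inord n' : 'I_n'.+1) = ord0 by apply/val_inj; rewrite /= inordK ?modnn.
  have := dS (inord n'); rewrite e Hk // -signr_odd.
  move: on => /= /negbTE ->; rewrite expr0 mul1r => /eqP.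
  rewrite -subr_eq0 opprK -mulr2n -mulr_natl => /eqP H.
  have u : ((2%:R : 'Z_m'.+2) \is a GRing.unit)%R.
    by rewrite unitZpE // coprimen2.
  by rewrite -[d ord0]mul1r -(mulVr u) -mulrA H mulr0.
apply/ffunP=> i; apply/eqP; rewrite -subr_eq0; apply/eqP.
rewrite -[i]inord_val.
by rewrite -/(d _) Hk ?d0 ?mulr0 // -ltnS.
Qed.

Theorem corollary2p3 (m n : nat) :
  (1 <= n)%N -> (2 <= m)%N -> odd n -> odd m ->
  forall u : {ffun 'I_n -> 'Z_m}, in_ducci_cycle u.
Proof.
case: n => [//|n'] _; case: m => [//|[//|m']] _ on om u.
exists (order (@ducci m'.+2 n'.+1) u); split; first exact: order_gt0.
by apply: iter_order; apply: ducci_inj.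
Qed.
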